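(* Let $u\in\mathcal{R}_{16}$ be such that $|u|=1$. Then $u=\zeta_{16}^\ell$ for some $0\le\ell\le 15$.
   Context: $\zeta_{16}=e^{2\pi i/16}$ and $\mathcal{R}_{16}$ is the smallest subring of $\mathbb{C}$ containing $1/2$ and $\zeta_{16}$. *)

(* Defs.v *)
(* complex numbers modelled by algC (algebraic complex numbers),
   which contains every element of R_16. *)
From HB Require Import structures.
From mathcomp Require Import all_boot all_order all_algebra all_field.
Set Implicit Arguments. Unset Strict Implicit. Unset Printing Implicit Defensive.
Import Order.TTheory GRing.Theory Num.Theory.
Local Open Scope ring_scope.

(* zeta16 = e^{2 pi i/16} = cos(pi/8) + i sin(pi/8),
   with cos(pi/8) = sqrt(2+sqrt 2)/2 and sin(pi/8) = sqrt(2-sqrt 2)/2. *)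
Definition zeta16 : algC :=
  (sqrtC (2 + sqrtC 2) + 'i * sqrtC (2 - sqrtC 2)) / 2.

Inductive in_R16 : algC -> Prop :=
  | R16_one : in_R16 1
  | R16_half : in_R16 (2^-1)
  | R16_zeta : in_R16 zeta16
  | R16_add x y : in_R16 x -> in_R16 y -> in_R16 (x + y)
  | R16_opp x : in_R16 x -> in_R16 (- x)
  | R16_mul x y : in_R16 x -> in_R16 y -> in_R16 (x * y).

(* Main.v *)
Require Import Defs.
From HB Require Import structures.
From mathcomp Require Import all_boot all_order all_algebra all_field.
From mathcomp Require Import ring lra zify.
Import Order.TTheory GRing.Theory Num.Theory.
Local Open Scope ring_scope.
Lemma zeta8 : zeta16 ^+ 8 = -1.
Proof.
set s := sqrtC (2 : algC).
set a := sqrtC (2 + s); set b := sqrtC (2 - s).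
have s0 : 0 <= s by rewrite sqrtC_ge0 ler0n.
have s2 : s ^+ 2 = 2 by rewrite sqrtCK.
have sle : s <= 2.
  have -> : (2 : algC) = sqrtC 4.
    by rewrite (_ : (4 : algC) = 2 ^+ 2) ?sqrCK ?ler0n // expr2 -natrM.
  by rewrite /s ler_sqrtC ?nnegrE ?ler_nat ?ler0n.

have a2 : a ^+ 2 = 2 + s by rewrite sqrtCK.
have b2 : b ^+ 2 = 2 - s by rewrite sqrtCK.
have ab : a * b = s.
  rewrite /a /b -sqrtCM; last 2 first.
  - by rewrite nnegrE; apply: addr_ge0 => //; rewrite ler0n.
  - by rewrite nnegrE subr_ge0.
  congr sqrtC; transitivity (4 - s ^+ 2); first ring. by rewrite s2; ring.
have z2 : zeta16 ^+ 2 = s * (1 + 'i) / 2.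
  rewrite /zeta16 -/s -/a -/b.
  transitivity ((a ^+ 2 + 2 * 'i * (a * b) + 'i ^+ 2 * b ^+ 2) / 4).
    by field.
  rewrite a2 b2 ab sqrCi. by field.
have z4 : zeta16 ^+ 4 = 'i.
  rewrite (_ : 4 = 2 * 2)%N // exprM z2.
  transitivity (s ^+ 2 * (1 + 2 * 'i + 'i ^+ 2) / 4); first by field.
  by rewrite s2 sqrCi; field.
by rewrite (_ : 8 = 4 * 2)%N // exprM z4 sqrCi.
Qed.

Lemma zeta16_1 : zeta16 ^+ 16 = 1.
Proof. by rewrite (_ : 16 = 8 * 2)%N // exprM zeta8 sqrrN expr1n. Qed.

Lemma zeta_prim : 16.-primitive_root zeta16.
Proof.
have [m pm dm] := prim_order_exists (isT : (0 < 16)%N) zeta16_1.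
have : (m \in [:: 1; 2; 4; 8; 16])%N.
  have m0 := prim_order_gt0 pm.
  move: (dvdn_leq (isT : (0 < 16)%N) dm); move: m0 dm; move: m {pm}.
  by do 17! case=> //.
rewrite !inE => /orP[/eqP me|/orP[/eqP me|/orP[/eqP me|/orP[/eqP me|/eqP me]]]];
  last by rewrite -me.
all: have := prim_expr_order pm; rewrite me => h.
all: have h8 : zeta16 ^+ 8 = 1 by
  first [ rewrite (_ : 8 = 1 * 8)%N // exprM h expr1n
        | rewrite (_ : 8 = 2 * 4)%N // exprM h expr1n
        | rewrite (_ : 8 = 4 * 2)%N // exprM h expr1n
        | rewrite h ].
all: move: h8; rewrite zeta8 => h1.
all: have : (2%:R : algC) == 0 by rewrite mulr2n -{1}h1 addNr.
all: by rewrite pnatr_eq0.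
Qed.

Lemma zeta_conj : zeta16^* = - zeta16 ^+ 7.
Proof.
have n1 : `|zeta16| = 1.
  apply/eqP; rewrite -(pexpr_eq1 (isT : (0 < 16)%N)) ?normr_ge0 //.
  by rewrite -normrX zeta16_1 normr1.
have h : zeta16^* * zeta16 = 1 by rewrite -normCKC n1 expr1n.
transitivity (zeta16^* * (zeta16 * - zeta16 ^+ 7)).
  by rewrite mulrN -exprS zeta8 opprK mulr1.
by rewrite mulrA h mul1r.
Qed.

Record v8 (R : Type) := V8 { c0 : R; c1 : R; c2 : R; c3 : R; c4 : R; c5 : R; c6 : R; c7 : R }.

Arguments V8 {R}.

Definition ev {R : nzRingType} (z : R) (a : v8 R) : R :=
  let: V8 a0 a1 a2 a3 a4 a5 a6 a7 := a in a0 + a1 * z + a2 * z ^+ 2 + a3 * z ^+ 3 + a4 * z ^+ 4 + a5 * z ^+ 5 + a6 * z ^+ 6 + a7 * z ^+ 7.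

Definition vmul {R : nzRingType} (a b : v8 R) : v8 R :=
  let: V8 a0 a1 a2 a3 a4 a5 a6 a7 := a in let: V8 b0 b1 b2 b3 b4 b5 b6 b7 := b in
  V8 ((a0 * b0) - (a1 * b7 + a2 * b6 + a3 * b5 + a4 * b4 + a5 * b3 + a6 * b2 + a7 * b1))
   ((a0 * b1 + a1 * b0) - (a2 * b7 + a3 * b6 + a4 * b5 + a5 * b4 + a6 * b3 + a7 * b2))
   ((a0 * b2 + a1 * b1 + a2 * b0) - (a3 * b7 + a4 * b6 + a5 * b5 + a6 * b4 + a7 * b3))
   ((a0 * b3 + a1 * b2 + a2 * b1 + a3 * b0) - (a4 * b7 + a5 * b6 + a6 * b5 + a7 * b4))
   ((a0 * b4 + a1 * b3 + a2 * b2 + a3 * b1 + a4 * b0) - (a5 * b7 + a6 * b6 + a7 * b5))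
   ((a0 * b5 + a1 * b4 + a2 * b3 + a3 * b2 + a4 * b1 + a5 * b0) - (a6 * b7 + a7 * b6))
   ((a0 * b6 + a1 * b5 + a2 * b4 + a3 * b3 + a4 * b2 + a5 * b1 + a6 * b0) - (a7 * b7))
   ((a0 * b7 + a1 * b6 + a2 * b5 + a3 * b4 + a4 * b3 + a5 * b2 + a6 * b1 + a7 * b0)).

Definition vconj {R : zmodType} (a : v8 R) : v8 R :=
  let: V8 a0 a1 a2 a3 a4 a5 a6 a7 := a in V8 a0 (-a7) (-a6) (-a5) (-a4) (-a3) (-a2) (-a1).

Definition vadd {R : zmodType} (a b : v8 R) : v8 R :=
  let: V8 a0 a1 a2 a3 a4 a5 a6 a7 := a in let: V8 b0 b1 b2 b3 b4 b5 b6 b7 := b in V8 (a0 + b0) (a1 + b1) (a2 + b2) (a3 + b3) (a4 + b4) (a5 + b5) (a6 + b6) (a7 + b7).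

Definition vopp {R : zmodType} (a : v8 R) : v8 R :=
  let: V8 a0 a1 a2 a3 a4 a5 a6 a7 := a in V8 (- a0) (- a1) (- a2) (- a3) (- a4) (- a5) (- a6) (- a7).

Definition vscl {R : nzRingType} (k : R) (a : v8 R) : v8 R :=
  let: V8 a0 a1 a2 a3 a4 a5 a6 a7 := a in V8 (k * a0) (k * a1) (k * a2) (k * a3) (k * a4) (k * a5) (k * a6) (k * a7).

Definition map8 {R S : Type} (f : R -> S) (a : v8 R) : v8 S :=
  let: V8 a0 a1 a2 a3 a4 a5 a6 a7 := a in V8 (f a0) (f a1) (f a2) (f a3) (f a4) (f a5) (f a6) (f a7).

Definition allv {R : Type} (P : R -> bool) (a : v8 R) : bool :=
  let: V8 a0 a1 a2 a3 a4 a5 a6 a7 := a in [&& P a0, P a1, P a2, P a3, P a4, P a5, P a6 & P a7].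

Definition cnorm {R : nzRingType} (a : v8 R) : v8 R := vmul a (vconj a).

Lemma ev_mul (R : comNzRingType) (z : R) (a b : v8 R) :
  z ^+ 8 = -1 -> ev z a * ev z b = ev z (vmul a b).
Proof.
move=> hz; case: a => a0 a1 a2 a3 a4 a5 a6 a7; case: b => b0 b1 b2 b3 b4 b5 b6 b7; rewrite /ev /vmul /=.
have e : z ^+ 8 + 1 = 0 by rewrite hz addNr.
transitivity (((a0 * b0) - (a1 * b7 + a2 * b6 + a3 * b5 + a4 * b4 + a5 * b3 + a6 * b2 + a7 * b1)) * 1 + ((a0 * b1 + a1 * b0) - (a2 * b7 + a3 * b6 + a4 * b5 + a5 * b4 + a6 * b3 + a7 * b2)) * z + ((a0 * b2 + a1 * b1 + a2 * b0) - (a3 * b7 + a4 * b6 + a5 * b5 + a6 * b4 + a7 * b3)) * z ^+ 2 + ((a0 * b3 + a1 * b2 + a2 * b1 + a3 * b0) - (a4 * b7 + a5 * b6 + a6 * b5 + a7 * b4)) * z ^+ 3 + ((a0 * b4 + a1 * b3 + a2 * b2 + a3 * b1 + a4 * b0) - (a5 * b7 + a6 * b6 + a7 * b5)) * z ^+ 4 + ((a0 * b5 + a1 * b4 + a2 * b3 + a3 * b2 + a4 * b1 + a5 * b0) - (a6 * b7 + a7 * b6)) * z ^+ 5 + ((a0 * b6 + a1 * b5 + a2 * b4 + a3 * b3 + a4 * b2 + a5 * b1 + a6 * b0) - (a7 * b7)) * z ^+ 6 + ((a0 * b7 + a1 * b6 + a2 * b5 + a3 * b4 + a4 * b3 + a5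 * b2 + a6 * b1 + a7 * b0)) * z ^+ 7 + (z ^+ 8 + 1) * ((a1 * b7 + a2 * b6 + a3 * b5 + a4 * b4 + a5 * b3 + a6 * b2 + a7 * b1) * 1 + (a2 * b7 + a3 * b6 + a4 * b5 + a5 * b4 + a6 * b3 + a7 * b2) * z + (a3 * b7 + a4 * b6 + a5 * b5 + a6 * b4 + a7 * b3) * z ^+ 2 + (a4 * b7 + a5 * b6 + a6 * b5 + a7 * b4) * z ^+ 3 + (a5 * b7 + a6 * b6 + a7 * b5) * z ^+ 4 + (a6 * b7 + a7 * b6) * z ^+ 5 + (a7 * b7) * z ^+ 6)).
  ring.
rewrite e mul0r addr0 /=; ring.
Qed.

Lemma ev_conj (R : comNzRingType) (z : R) (a : v8 R) :
  z ^+ 8 = -1 -> ev (- z ^+ 7) a = ev z (vconj a).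
Proof.
move=> hz; case: a => a0 a1 a2 a3 a4 a5 a6 a7; rewrite /ev /vconj /=.
have e : z ^+ 8 + 1 = 0 by rewrite hz addNr.
transitivity (a0 + (-a7) * z + (-a6) * z ^+ 2 + (-a5) * z ^+ 3 + (-a4) * z ^+ 4 + (-a3) * z ^+ 5 + (-a2) * z ^+ 6 + (-a1) * z ^+ 7 + (z ^+ 8 + 1) * (a2 * ((1) * z ^+ 6) + a3 * ((1) * z ^+ 5 + (-1) * z ^+ 13) + a4 * ((1) * z ^+ 4 + (-1) * z ^+ 12 + (1) * z ^+ 20) + a5 * ((1) * z ^+ 3 + (-1) * z ^+ 11 + (1) * z ^+ 19 + (-1) * z ^+ 27) + a6 * ((1) * z ^+ 2 + (-1) * z ^+ 10 + (1) * z ^+ 18 + (-1) * z ^+ 26 + (1) * z ^+ 34) + a7 * ((1) * z + (-1) * z ^+ 9 + (1) * z ^+ 17 + (-1) * z ^+ 25 + (1) * z ^+ 33 + (-1) * z ^+ 41))).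
  ring.
rewrite e mul0r addr0 /=; ring.
Qed.


Lemma intr_vmul (R : comNzRingType) (a b : v8 int) :
  map8 (fun x => x%:~R : R) (vmul a b) = vmul (map8 intr a) (map8 intr b).
Proof. by case: a; case: b => *; rewrite /= !(intrD, intrM, intrN). Qed.

Lemma intr_vconj (R : comNzRingType) (a : v8 int) :
  map8 (fun x => x%:~R : R) (vconj a) = vconj (map8 intr a).
Proof. by case: a => *; rewrite /= !intrN. Qed.

Lemma cnorm_split (R : comNzRingType) (q r : v8 R) :
  cnorm (vadd (vscl 4 q) r) =
  vadd (cnorm r) (vscl 4 (vadd (vmul q (vconj r)) (vadd (vmul r (vconj q)) (vscl 4 (vmul q (vconj q)))))).
Proof. by case: q; case: r => *; rewrite /cnorm /=; congr V8; ring. Qed.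

Lemma cnorm_scl2 (R : comNzRingType) (a : v8 R) :
  cnorm (vscl 2 a) = vscl 4 (cnorm a).
Proof. by case: a => *; rewrite /cnorm /=; congr V8; ring. Qed.

Definition L4 : seq int := [:: 0; 1; 2; 3].
Definition chk : bool :=
  all (fun r0 => all (fun r1 => all (fun r2 => all (fun r3 =>
  all (fun r4 => all (fun r5 => all (fun r6 => all (fun r7 =>
    let r := V8 r0 r1 r2 r3 r4 r5 r6 r7 in
    allv (fun x => (x %% 4 == 0)%Z) (cnorm r) ==> allv (fun x => (x %% 2 == 0)%Z) r)
  L4) L4) L4) L4) L4) L4) L4) L4.

Lemma chkT : chk.
Proof. by vm_compute. Qed.


Lemma mod4P (x e : int) : ((x + 4 * e) %% 4 == 0)%Z = (x %% 4 == 0)%Z.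
Proof. by rewrite addrC mulrC modzMDl. Qed.

Lemma inL4 (x : int) : (x %% 4)%Z \in L4.
Proof.
have h0 := @modz_ge0 x 4 isT; have h1 := @ltz_pmod x 4 isT.
move: (x %% 4)%Z h0 h1 => y h0 h1; rewrite /L4 !inE.
lia.
Qed.

Lemma even_of (x : int) : ((x %% 4)%Z %% 2)%Z == 0 -> x = 2 * (x %/ 2)%Z.
Proof.
move=> /eqP/dvdz_mod0P h.
have h2 : (2 %| x)%Z.
  rewrite (divz_eq x 4) rpredD //; apply: dvdz_mull; exact: (isT : (2 %| 4)%Z).
by rewrite mulrC divzK.
Qed.

Lemma mod4_even (a : v8 int) :
  allv (fun x => (x %% 4 == 0)%Z) (cnorm a) -> exists a', a = vscl 2 a'.
Proof.
case: a => a0 a1 a2 a3 a4 a5 a6 a7.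
set q := V8 (a0 %/ 4)%Z (a1 %/ 4)%Z (a2 %/ 4)%Z (a3 %/ 4)%Z (a4 %/ 4)%Z (a5 %/ 4)%Z (a6 %/ 4)%Z (a7 %/ 4)%Z.
set r := V8 (a0 %% 4)%Z (a1 %% 4)%Z (a2 %% 4)%Z (a3 %% 4)%Z (a4 %% 4)%Z (a5 %% 4)%Z (a6 %% 4)%Z (a7 %% 4)%Z.
have ea : V8 a0 a1 a2 a3 a4 a5 a6 a7 = vadd (vscl 4 q) r.
  by rewrite /=; congr V8; rewrite mulrC -divz_eq.
rewrite {1}ea cnorm_split.
have hr : allv (fun x => (x %% 4 == 0)%Z) (vadd (cnorm r) (vscl 4 (vadd (vmul q (vconj r)) (vadd (vmul r (vconj q)) (vscl 4 (vmul q (vconj q))))))) ->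
          allv (fun x => (x %% 4 == 0)%Z) (cnorm r).
  move: (cnorm r) (vadd (vmul q (vconj r)) _) => c e.
  case: c => c0 c1 c2 c3 c4 c5 c6 c7; case: e => e0 e1 e2 e3 e4 e5 e6 e7.
  by rewrite /= !mod4P.
move=> /hr h.
have := chkT.
move=> /allP /(_ _ (inL4 a0)) /allP /(_ _ (inL4 a1)) /allP /(_ _ (inL4 a2)) /allP /(_ _ (inL4 a3))
  /allP /(_ _ (inL4 a4)) /allP /(_ _ (inL4 a5)) /allP /(_ _ (inL4 a6)) /allP /(_ _ (inL4 a7)).
move=> /implyP /(_ h) /= /andP[e0 /andP[e1 /andP[e2 /andP[e3 /andP[e4 /andP[e5 /andP[e6 e7]]]]]]].
exists (V8 (a0 %/ 2)%Z (a1 %/ 2)%Z (a2 %/ 2)%Z (a3 %/ 2)%Z (a4 %/ 2)%Z (a5 %/ 2)%Z (a6 %/ 2)%Z (a7 %/ 2)%Z).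
rewrite /=; congr V8; apply: even_of; assumption.
Qed.


Lemma sq_cases (x y : int) : x * x + y = 1 -> 0 <= y -> (x = 0 /\ y = 1) \/ ((x = 1 \/ x = -1) /\ y = 0).
Proof. nia. Qed.
Lemma sq0 (x y : int) : x * x + y = 0 -> 0 <= y -> x = 0 /\ y = 0.
Proof. nia. Qed.
Lemma sq1 (x : int) : x * x = 1 -> x = 1 \/ x = -1.
Proof. nia. Qed.
Lemma sq00 (x : int) : x * x = 0 -> x = 0.
Proof. nia. Qed.

Lemma base_case (R : comNzRingType) (z : R) (a0 a1 a2 a3 a4 a5 a6 a7 : int) :
  z ^+ 8 = -1 -> a0 * a0 + (a1 * a1 + (a2 * a2 + (a3 * a3 + (a4 * a4 + (a5 * a5 + (a6 * a6 + (a7 * a7))))))) = 1 ->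
  exists l, (l <= 15)%N /\ ev z (map8 intr (V8 a0 a1 a2 a3 a4 a5 a6 a7)) = z ^+ l.
Proof.
move=> hz h0.
have [[-> {}h0]|[hs hr]] := sq_cases _ _ h0 (ltac:(nia)).
- have [[-> {}h0]|[hs hr]] := sq_cases _ _ h0 (ltac:(nia)).
  - have [[-> {}h0]|[hs hr]] := sq_cases _ _ h0 (ltac:(nia)).
  - have [[-> {}h0]|[hs hr]] := sq_cases _ _ h0 (ltac:(nia)).
  - have [[-> {}h0]|[hs hr]] := sq_cases _ _ h0 (ltac:(nia)).
  - have [[-> {}h0]|[hs hr]] := sq_cases _ _ h0 (ltac:(nia)).
  - have [[-> {}h0]|[hs hr]] := sq_cases _ _ h0 (ltac:(nia)).
  - have [->|->] := sq1 _ h0.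
  - exists 7%N; split => //; rewrite /= ?expr0; ring.
  - exists 15%N; split => //; rewrite /= (_ : 15 = 7 + 8)%N // exprD hz ?expr0; ring.
  - move/sq00: hr => ->.
    case: hs => ->.
    + exists 6%N; split => //; rewrite /= ?expr0; ring.
    + exists 14%N; split => //; rewrite /= (_ : 14 = 6 + 8)%N // exprD hz ?expr0; ring.
  - have [-> {}hr] := sq0 _ _ hr (ltac:(nia)). move/sq00: hr => ->.
    case: hs => ->.
    + exists 5%N; split => //; rewrite /= ?expr0; ring.
    + exists 13%N; split => //; rewrite /= (_ : 13 = 5 + 8)%N // exprD hz ?expr0; ring.
  - have [-> {}hr] := sq0 _ _ hr (ltac:(nia)). have [-> {}hr] := sq0 _ _ hr (ltac:(nia)). move/sq00: hr => ->.
    case: hs => ->.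
    + exists 4%N; split => //; rewrite /= ?expr0; ring.
    + exists 12%N; split => //; rewrite /= (_ : 12 = 4 + 8)%N // exprD hz ?expr0; ring.
  - have [-> {}hr] := sq0 _ _ hr (ltac:(nia)). have [-> {}hr] := sq0 _ _ hr (ltac:(nia)). have [-> {}hr] := sq0 _ _ hr (ltac:(nia)). move/sq00: hr => ->.
    case: hs => ->.
    + exists 3%N; split => //; rewrite /= ?expr0; ring.
    + exists 11%N; split => //; rewrite /= (_ : 11 = 3 + 8)%N // exprD hz ?expr0; ring.
  - have [-> {}hr] := sq0 _ _ hr (ltac:(nia)). have [-> {}hr] := sq0 _ _ hr (ltac:(nia)). have [-> {}hr] := sq0 _ _ hr (ltac:(nia)). have [-> {}hr] := sq0 _ _ hr (ltac:(nia)). move/sq00: hr => ->.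
    case: hs => ->.
    + exists 2%N; split => //; rewrite /= ?expr0; ring.
    + exists 10%N; split => //; rewrite /= (_ : 10 = 2 + 8)%N // exprD hz ?expr0; ring.
  - have [-> {}hr] := sq0 _ _ hr (ltac:(nia)). have [-> {}hr] := sq0 _ _ hr (ltac:(nia)). have [-> {}hr] := sq0 _ _ hr (ltac:(nia)). have [-> {}hr] := sq0 _ _ hr (ltac:(nia)). have [-> {}hr] := sq0 _ _ hr (ltac:(nia)). move/sq00: hr => ->.
    case: hs => ->.
    + exists 1%N; split => //; rewrite /= ?expr0; ring.
    + exists 9%N; split => //; rewrite /= (_ : 9 = 1 + 8)%N // exprD hz ?expr0; ring.
- have [-> {}hr] := sq0 _ _ hr (ltac:(nia)). have [-> {}hr] := sq0 _ _ hr (ltac:(nia)). have [-> {}hr] := sq0 _ _ hr (ltac:(nia)). have [-> {}hr] := sq0 _ _ hr (ltac:(nia)). have [-> {}hr] := sq0 _ _ hr (ltac:(nia)). have [-> {}hr] := sq0 _ _ hr (ltac:(nia)). move/sq00: hr => ->.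
  case: hs => ->.
  + exists 0%N; split => //; rewrite /= ?expr0; ring.
  + exists 8%N; split => //; rewrite /= (_ : 8 = 0 + 8)%N // exprD hz ?expr0; ring.
Qed.


Lemma ev_scl2 (R : comNzRingType) (z : R) (a : v8 int) :
  ev z (map8 intr (vscl 2 a)) = 2 * ev z (map8 intr a).
Proof. by case: a => *; rewrite /= !intrM; ring. Qed.

Lemma key (R : comNzRingType) (z : R) : z ^+ 8 = -1 ->
  forall n (a : v8 int), cnorm a = V8 (4 ^+ n) 0 0 0 0 0 0 0 ->
  exists l, (l <= 15)%N /\ ev z (map8 intr a) = 2 ^+ n * z ^+ l.
Proof.
move=> hz; elim=> [|n IH] a.
  case: a => a0 a1 a2 a3 a4 a5 a6 a7; rewrite /cnorm /= => [[E0 _ _ _ _ _ _ _]].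
  have h0 : a0 * a0 + (a1 * a1 + (a2 * a2 + (a3 * a3 + (a4 * a4 + (a5 * a5 + (a6 * a6 + a7 * a7)))))) = 1.
    by transitivity (4 ^+ 0 : int); [rewrite -E0; ring | rewrite expr0].
  have [l [hl e]] := base_case R z _ _ _ _ _ _ _ _ hz h0.
  by exists l; rewrite expr0 mul1r.
move=> E.
have : allv (fun x => (x %% 4 == 0)%Z) (cnorm a).
  by rewrite E /= exprS mod0z modzMr.
move=> /mod4_even [a' ea].
have inj4 : forall x y : int, 4 * x = 4 * y -> x = y by move=> x y; lia.
have E' : cnorm a' = V8 (4 ^+ n) 0 0 0 0 0 0 0.
  move: E; rewrite ea cnorm_scl2 exprS.
  case: (cnorm a') => c0 c1 c2 c3 c4 c5 c6 c7 /= [h0 h1 h2 h3 h4 h5 h6 h7].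
  congr V8; apply: inj4; rewrite ?mulr0; assumption.
have [l [hl e]] := IH a' E'.
by exists l; split => //; rewrite ea ev_scl2 e exprS mulrA.
Qed.


Lemma i2X (R : comNzRingType) m : ((2 : int) ^+ m)%:~R = (2 : R) ^+ m.
Proof. by elim: m => [|m IH]; rewrite ?expr0 ?exprS ?intrM ?IH. Qed.

Lemma ev_lin (R : comNzRingType) (z : R) (k l : int) (a b : v8 int) :
  ev z (map8 intr (vadd (vscl k a) (vscl l b))) =
  k%:~R * ev z (map8 intr a) + l%:~R * ev z (map8 intr b).
Proof. by case: a; case: b => *; rewrite /= !(intrD, intrM); ring. Qed.

Lemma ev_vopp (R : comNzRingType) (z : R) (a : v8 int) :
  ev z (map8 intr (vopp a)) = - ev z (map8 intr a).
Proof. by case: a => *; rewrite /= !intrN; ring. Qed.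

Lemma ev_conjC (a : v8 int) :
  (ev zeta16 (map8 intr a))^* = ev (zeta16^*) (map8 intr a).
Proof. by case: a => *; rewrite /= !(rmorphD, rmorphM, rmorphXn, rmorph_int). Qed.

Lemma indep (c : v8 int) : ev zeta16 (map8 intr c) = 0 -> c = V8 0 0 0 0 0 0 0 0.
Proof.
case: c => c0 c1 c2 c3 c4 c5 c6 c7 /= h.
pose s : seq rat := [:: c0%:~R; c1%:~R; c2%:~R; c3%:~R; c4%:~R; c5%:~R; c6%:~R; c7%:~R].
have hq : root (map_poly (@ratr algC) (Poly s)) zeta16.
  rewrite /root map_Poly_id0 ?rmorph0 // horner_Poly /= !rmorph_int.
  by apply/eqP; rewrite -[RHS]h; ring.
have [p [mp _] dp] := minCpolyP zeta16.
have sp : size p = 9%N.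
  rewrite -(size_map_poly (@ratr algC)) -mp (minCpoly_cyclotomic zeta_prim).
  by rewrite size_cyclotomic; vm_compute.
have q0 : Poly s = 0.
  apply/eqP; apply: contraT => nq.
  have := dvdp_leq nq (etrans (esym (dp _)) hq).
  by rewrite sp; move/leq_trans => /(_ _ (size_Poly s)).
have co i : (s`_i = 0) by rewrite -coef_Poly q0 coef0.
have ci : forall x : int, (x%:~R : rat) = 0 -> x = 0 by move=> x /eqP; rewrite intr_eq0 => /eqP.
by congr V8; apply: ci; [exact: (co 0%N) | exact: (co 1%N) | exact: (co 2%N) | exact: (co 3%N)
  | exact: (co 4%N) | exact: (co 5%N) | exact: (co 6%N) | exact: (co 7%N)].
Qed.

Lemma indep2 (c d : v8 int) : ev zeta16 (map8 intr c) = ev zeta16 (map8 intr d) -> c = d.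
Proof.
move=> h.
have : ev zeta16 (map8 intr (vadd (vscl 1 c) (vscl 1 (vopp d)))) = 0.
  by rewrite ev_lin ev_vopp h; ring.
move/indep; case: c {h}; case: d => d0 d1 d2 d3 d4 d5 d6 d7 c0 c1 c2 c3 c4 c5 c6 c7 /=.
case=> h0 h1 h2 h3 h4 h5 h6 h7; congr V8; lia.
Qed.

Definition rep (u : algC) := exists n (a : v8 int), u = ev zeta16 (map8 intr a) / 2 ^+ n.

Lemma two_neq0 n : (2 : algC) ^+ n != 0.
Proof. by rewrite expf_neq0 // pnatr_eq0. Qed.

Lemma rep_R16 u : in_R16 u -> rep u.
Proof.
elim=> {u}.
- by exists 0%N, (V8 1 0 0 0 0 0 0 0); rewrite /= expr0 divr1; ring.
- by exists 1%N, (V8 1 0 0 0 0 0 0 0); rewrite /= expr1; field.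
- by exists 0%N, (V8 0 1 0 0 0 0 0 0); rewrite /= expr0 divr1; ring.
- move=> x y _ [n [a ->]] _ [m [b ->]].
  exists (n + m)%N, (vadd (vscl (2 ^+ m) a) (vscl (2 ^+ n) b)).
  rewrite ev_lin !i2X exprD.
  have := two_neq0 n; have := two_neq0 m.
  move: (2 ^+ n : algC) (2 ^+ m : algC) => N M hM hN.
  by field; rewrite hN hM.
- move=> x _ [n [a ->]]; exists n, (vopp a); rewrite ev_vopp; ring.
- move=> x y _ [n [a ->]] _ [m [b ->]].
  exists (n + m)%N, (vmul a b).
  rewrite intr_vmul -ev_mul ?zeta8 // exprD.
  have := two_neq0 n; have := two_neq0 m.
  move: (2 ^+ n : algC) (2 ^+ m : algC) => N M hM hN.
  by field; rewrite hN hM.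
Qed.

Theorem lemma6p2 (u : algC) :
  in_R16 u -> `|u| = 1 ->
  exists l : nat, (l <= 15)%N /\ u = zeta16 ^+ l.
Proof.
move=> /rep_R16 [n [a ->]] nu.
set x := ev zeta16 (map8 intr a).
have nx : `|x| = 2 ^+ n.
  move: nu; rewrite normf_div normrX normr_nat => /eqP.
  by rewrite (can2_eq (divfK (two_neq0 n)) (mulfK (two_neq0 n))) mul1r => /eqP.
have xx : x * x^* = (4 ^+ n)%:~R.
  have -> : ((4:int) ^+ n)%:~R = (4 : algC) ^+ n.
    by elim: (n) => [|m IH]; rewrite ?expr0 ?exprS ?intrM ?IH.
  rewrite -normCK nx -exprM mulnC exprM; congr (_ ^+ _).
  by rewrite expr2 -natrM.
have ec : ev zeta16 (map8 intr (cnorm a)) = ev zeta16 (map8 intr (V8 (4 ^+ n) 0 0 0 0 0 0 0)).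
  rewrite /cnorm intr_vmul -ev_mul ?zeta8 // intr_vconj -ev_conj ?zeta8 //.
  rewrite -zeta_conj -ev_conjC -/x xx /=; ring.
have [l [hl e]] := key _ _ zeta8 _ _ (indep2 _ _ ec).
exists l; split => //; rewrite /x e [2 ^+ n * _]mulrC mulfK //; exact: two_neq0.
Qed.
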